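(* Let $n,f$ be integers with $1\le f\le n-1$ and $n\le 2f$. Then $(f+1)\text{-TAg}(n,f)$ is not $C$-reducible to $f\text{-TAg}(n,f)$, and consequently $\mathrm{Cons}(n,f)$ is not $C$-reducible to $f\text{-TAg}(n,f)$.
   Context: Model: a finite set of processes runs an asynchronous algorithm communicating by reliable message passing with unbounded delays and speeds; processes fail only by crashing. Time is $\mathcal T=\mathbb N$; a failure pattern $F$ for $\Pi$ is a nondecreasing map $\mathcal T\to2^\Pi$, $Faulty(F)=\bigcup_tF(t)$. A binary agreement problem $P$ for $\Pi$ maps each $(F,\vec V)$, $\vec V\in\{0,1\}^\Pi$, to a nonempty $P(F,\vec V)\subseteq\{0,1\}$; a task is $T=(P,f)$. An algorithm solves $T$ if in every run with $|Faulty(F)|\le f$ and initial values $\vec V$: every correct process eventually decides, decisions are irrevocable, no two processes decide differently, and decisions lie in $P(F,\vec V)$. $k\text{-TAg}_\Pi(F,\vec V)=\{0\}$ if at least $k$ entries of $\vec V$ are $0$; $=\{1\}$ if $\vec V$ is all-ones and $|Faulty(F)|\le k-1$; $=\{0,1\}$ otherwise; $k\text{-TAg}(\Pi,f)=(k\text{-TAg}_\Pi,f)$; $k\text{-TAg}(n,f)$ and $\mathrm{Cons}(n,f)=n\text{-TAg}(n,f)$ are the versions for $\Pi=\{1,\dots,n\}$. Oracles: for $T=(P,f)$ on $\Pi$, $\mathcal O.T$ is a black box with consultants $\Pi$; its history is a sequence of successive consultations, in each of which every consultant may submit at most one query in $\{0,1\}$ and the oracle returns a common response $d$ with $d\in P(F,\vec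 V)$ for every $\vec V$ extending the partial query vector (the oracle may base its answers on the whole failure pattern $F$, including crashes that occur later), and every correct querier gets the response whenever at least $|\Pi|-f$ consultants query; $\mathcal O.T$ is the most general such oracle. $T_1\le_C T_2$ means there is an algorithm solving $T_1$ whose processes, besides message passing, may consult the oracle $\mathcal O.T_2$. *)

(* Defs.v *)
From mathcomp Require Import all_boot.
From mathcomp Require Import boolp.

Set Implicit Arguments.
Unset Strict Implicit.
Unset Printing Implicit Defensive.

(* Processes: Pi = 'I_n (the paper's {1,...,n}, shifted to {0,...,n-1}).
   Time: nat.  Binary values: bool (false = 0, true = 1). *)

Definition fpattern (n : nat) := nat -> {set 'I_n}.

Definition nondecreasing n (F : fpattern n) :=
  forall t t', t <= t' -> F t \subset F t'.

Definition Faulty n (F : fpattern n) : {set 'I_n} :=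
  [set p | `[< exists t, p \in F t >]].

Definition problem (n : nat) := fpattern n -> ('I_n -> bool) -> {set bool}.

Record task (n : nat) := Task { tprob : problem n; tres : nat }.

Definition kTAg_prob n (k : nat) : problem n := fun (F : fpattern n) (V : 'I_n -> bool) =>
  if k <= #|[set p | ~~ V p]| then [set false]
  else if [forall p, V p] && (#|Faulty F| < k)%N
       then [set true]
       else [set: bool].

Definition kTAg n (k f : nat) : task n := Task (@kTAg_prob n k) f.

Definition Cons_task n (f : nat) : task n := kTAg n n f.

(** At each step
    a process may receive (at most) one message (sender, content) and (at most)
    one oracle response (consultation index, value); it then moves to a new
    state, sends a list of (destination, content) messages and may submit one
    query to the oracle. *)
Record alg (n : nat) := Alg {
  St : Type;
  Msg : Type;
  init : 'I_n -> bool -> St;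
  step : 'I_n -> St -> option ('I_n * Msg) -> option (nat * bool) ->
         St * seq ('I_n * Msg) * option bool;
  dec : St -> option bool
}.
Arguments init {n} a _ _.
Arguments step {n} a _ _ _ _.
Arguments dec {n} a _.

Record run n (A : alg n) := Run {
  ev : nat -> option 'I_n;            (* process taking a step at time t *)
  rcv : nat -> option (nat * nat);    (* message received at t: id (send time, index) *)
  rsp : nat -> option nat;            (* consultation whose response is delivered at t *)
  st : nat -> 'I_n -> St A;           (* local states at the beginning of time t *)
  out : nat -> seq ('I_n * Msg A);    (* messages sent at time t *)
  qry : nat -> option bool;           (* oracle query submitted at time t *)
  oresp : nat -> bool                 (* common response of each consultation *)
}.

Section RunDefs.
Variables (n : nat) (A : alg n) (R : run A).

Definition minput (t : nat) : option ('I_n * Msg A) :=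
  match rcv R t with
  | Some (s, i) =>
      match ev R s, onth (out R s) i with
      | Some q, Some m => Some (q, m.2)
      | _, _ => None
      end
  | None => None
  end.

Definition rinput (t : nat) : option (nat * bool) :=
  match rsp R t with Some k => Some (k, oresp R k) | None => None end.

(* number of queries submitted by p before time t; the j-th query (from 0)
   of a process belongs to the j-th consultation of the oracle *)
Definition qcount (t : nat) (p : 'I_n) : nat :=
  \sum_(t' < t) ((ev R t' == Some p) && (qry R t' != None)).

Definition queried (k : nat) (p : 'I_n) (b : bool) : Prop :=
  exists t, [/\ ev R t = Some p, qry R t = Some b & qcount t p = k].

Definition queriers (k : nat) : {set 'I_n} :=
  [set p | `[< exists b, queried k p b >]].

Definition extends_qvec (k : nat) (V' : 'I_n -> bool) : Prop :=
  forall p b, queried k p b -> V' p = b.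

Definition run_steps (T2 : task n) (F : fpattern n) (V : 'I_n -> bool) : Prop :=
  [/\
      (forall p, st R 0 p = init A p (V p)),
      (forall t, ev R t = None ->
         [/\ rcv R t = None, rsp R t = None, out R t = [::], qry R t = None
           & st R t.+1 = st R t])
    &
      (forall t p, ev R t = Some p ->
         [/\ p \notin F t,
             st R t.+1 p = (step A p (st R t p) (minput t) (rinput t)).1.1,
             out R t = (step A p (st R t p) (minput t) (rinput t)).1.2,
             qry R t = (step A p (st R t p) (minput t) (rinput t)).2
           & forall p', p' != p -> st R t.+1 p' = st R t p'])].

Definition run_channels (F : fpattern n) : Prop :=
  [/\
      (forall t s i, rcv R t = Some (s, i) ->
         s < t /\ exists p m, ev R t = Some p /\ onth (out R s) i = Some (p, m)),
      (forall t t' x, rcv R t = Some x -> rcv R t' = Some x -> t = t'),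
      (forall s i p m, onth (out R s) i = Some (p, m) -> p \notin Faulty F ->
         exists t, rcv R t = Some (s, i))
    &
      (forall p, p \notin Faulty F -> forall t, exists t', t <= t' /\ ev R t' = Some p)].

Definition run_oracle (T2 : task n) (F : fpattern n) : Prop :=
  [/\
      (forall t k, rsp R t = Some k ->
         exists p, ev R t = Some p /\
           exists t0 b, [/\ t0 < t, ev R t0 = Some p, qry R t0 = Some b
                          & qcount t0 p = k]),
      (forall t t' p k, ev R t = Some p -> ev R t' = Some p ->
         rsp R t = Some k -> rsp R t' = Some k -> t = t'),
      (forall k, (exists t, rsp R t = Some k) ->
         forall V', extends_qvec k V' -> oresp R k \in tprob T2 F V')
    &
      (forall k, n - tres T2 <= #|queriers k| ->
         forall p, p \notin Faulty F -> (exists b, queried k p b) ->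
           exists t, ev R t = Some p /\ rsp R t = Some k)].

(** R is a run of A with initial values V and failure pattern F, in which
    processes may consult the (most general) oracle O.T2. *)
Definition is_run (T2 : task n) (F : fpattern n) (V : 'I_n -> bool) : Prop :=
  [/\ run_steps T2 F V, run_channels F & run_oracle T2 F].

End RunDefs.

Definition solves_with n (A : alg n) (T1 T2 : task n) : Prop :=
  forall (F : fpattern n) (V : 'I_n -> bool) (R : run A),
    nondecreasing F -> #|Faulty F| <= tres T1 -> is_run R T2 F V ->
    [/\
        (forall p, p \notin Faulty F -> exists t d, dec A (st R t p) = Some d),
        (forall p t t' d, t <= t' -> dec A (st R t p) = Some d ->
           dec A (st R t' p) = Some d),
        (forall p q t t' d d', dec A (st R t p) = Some d ->
           dec A (st R t' q) = Some d' -> d = d')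
      &
        (forall p t d, dec A (st R t p) = Some d -> d \in tprob T1 F V)].

Definition C_reducible n (T1 T2 : task n) : Prop :=
  exists A : alg n, solves_with A T1 T2.

(* Main.v *)
Require Import Defs.
From mathcomp Require Import all_boot.
From mathcomp Require Import boolp.
From Stdlib Require List.
From mathcomp Require Import zify.
Set Implicit Arguments. Unset Strict Implicit. Unset Printing Implicit Defensive.

Section ListLemmas.
Variable T : Type.
Lemma In_filter (P : pred T) x s : List.In x (filter P s) <-> List.In x s /\ P x.
Proof.
elim: s => [|y s IH] /=; first by split => //; case.
case: ifP => Py /=; rewrite IH.
- split.
  + case=> [<-|[H1 H2]]; first by split=> //; left.
    by split=> //; right.
  + case=> [[<-|H1] H2]; [by left|by right].
- split.
  + by case=> H1 H2; split=> //; right.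
  + case=> [[Hy|H1] H2]; last by [].
    by subst; rewrite Py in H2.
Qed.
Lemma In_cat x (s1 s2 : seq T) : List.In x (s1 ++ s2) <-> List.In x s1 \/ List.In x s2.
Proof.
elim: s1 => [|y s IH] /=; first by split; [right|case].
rewrite IH; tauto.
Qed.
Lemma hasP' (P : pred T) s : has P s <-> exists x, List.In x s /\ P x.
Proof.
elim: s => [|y s IH] /=; first by split=> //; case=> ? [].
split.
- case/orP=> [Py|]; first by exists y; split=> //; left.
  by case/IH=> x [??]; exists x; split=> //; right.
- case=> x [[<-|Hx] Px]; first by rewrite Px.
  by apply/orP; right; apply/IH; exists x.
Qed.
Lemma ohead_filter (P : pred T) s e : ohead (filter P s) = Some e -> List.In e s /\ P e.
Proof.
elim: s => [|y s IH] //=; case: ifP => Py /=.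
- by case=> <-; split=> //; left.
- by move=> /IH [??]; split=> //; right.
Qed.
Lemma eq_In_filter (P Q : pred T) s : (forall x, List.In x s -> P x = Q x) -> filter P s = filter Q s.
Proof.
elim: s => [|y s IH] //= H; rewrite H; last by left.
by rewrite IH // => x Hx; apply: H; right.
Qed.
Lemma filter_comm (P Q : pred T) s : filter P (filter Q s) = filter Q (filter P s).
Proof. by rewrite -!filter_predI; apply: eq_filter => x /=; rewrite andbC. Qed.
End ListLemmas.

Section PosLemmas.
Variables (T : Type) (X : eqType) (key : T -> nat * nat) (dst : T -> X).
Definition pos (x : nat * nat) (p : X) (s : seq T) :=
  count (fun e => dst e == p) (take (find (fun e => key e == x) s) s).

Lemma take_find_filter (P k : pred T) s : (forall e, List.In e s -> P e -> k e) ->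
  take (find P (filter k s)) (filter k s) = filter k (take (find P s) s).
Proof.
elim: s => [|e s IH] //= H.
have IH' : forall e, List.In e s -> P e -> k e by move=> e' He'; apply: H; right.
case Ke: (k e) => /=.
- case: (P e) => //=; by rewrite Ke IH.
- have -> : P e = false by apply/negP => /(H e (or_introl erefl)); rewrite Ke.
  by rewrite /= Ke IH.
Qed.

Lemma pos_filter x p (k : pred T) s : (forall e, List.In e s -> key e == x -> k e) ->
  pos x p (filter k s) <= pos x p s.
Proof.
move=> H; rewrite /pos take_find_filter // count_filter.
by apply: sub_count => e /andP [].
Qed.

Lemma pos_cat x p s1 s2 : has (fun e => key e == x) s1 -> pos x p (s1 ++ s2) = pos x p s1.
Proof.
move=> H; rewrite /pos find_cat H take_cat.
by rewrite -has_find H.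
Qed.

Lemma has_filter x (k : pred T) s : (forall e, List.In e s -> key e == x -> k e) ->
  has (fun e => key e == x) s -> has (fun e => key e == x) (filter k s).
Proof.
move=> H /hasP' [e [He Hx]]; apply/hasP'; exists e; split=> //.
by apply/In_filter; split=> //; apply: H.
Qed.

Lemma pos_strict x p s : has (fun e => key e == x) s ->
  (forall e, List.In e s -> key e == x -> dst e == p) ->
  (forall e e', List.In e s -> List.In e' s -> key e = key e' -> dst e = dst e') ->
  exists e, ohead (filter (fun e => dst e == p) s) = Some e /\
    (key e = x \/ pos x p (filter (fun e' => key e' != key e) s) < pos x p s).
Proof.
elim: s => [|e0 s IH] //= Hh Hd Hu.
have Hd' : forall e, List.In e s -> key e == x -> dst e == p by move=> e He; apply: Hd; right.
have Hu' : forall e e', List.In e s -> List.In e' s -> key e = key e' -> dst e = dst e'.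
  by move=> e e' He He'; apply: Hu; right.
case: (eqVneq (key e0) x) => Hx.
- by exists e0; rewrite (Hd e0 (or_introl erefl)) ?Hx //=; split=> //; left.
case: ifP => Hd0.
- exists e0; split=> //; right.
  rewrite /= eqxx /pos /= (negbTE Hx) /= Hd0 add1n ltnS.
  have := @pos_filter x p (fun e' => key e' != key e0) s.
  rewrite /pos; apply=> e He /eqP Hex; apply/eqP => Hk; by rewrite -Hk Hex eqxx in Hx.
- rewrite /= (negbTE Hx) in Hh.
  have [e [He Hor]] := IH Hh Hd' Hu'.
  exists e; split=> //; case: Hor => [->|Hlt]; first by left.
  right; have Hne : key e0 != key e.
    apply/eqP => Hk; have := Hu e0 e (or_introl erefl) _ Hk.
    have [He' _] := ohead_filter He.
    move=> /(_ (or_intror He')) Hde; have [_ /eqP Hp] := ohead_filter He.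
    by rewrite Hde Hp eqxx in Hd0.
  by rewrite /= Hne /pos /= (negbTE Hx) /= Hd0 /=.
Qed.
End PosLemmas.


Section Sim.
Variables (n : nat) (A : alg n) (p0 : 'I_n).

Record entry := Ent { eid : nat * nat; esrc : 'I_n; edst : 'I_n; emsg : Msg A }.
Record cfg := Cfg { csts : 'I_n -> St A; cpend : seq entry;
                    cpq : 'I_n -> option nat; cqc : 'I_n -> nat }.
Record sres := SRes { sc : cfg; srcv : option (nat * nat); srsp : option nat;
                      sout : seq ('I_n * Msg A); sqry : option bool }.

Fixpoint mk (t : nat) (p : 'I_n) (i : nat) (o : seq ('I_n * Msg A)) : seq entry :=
  match o with [::] => [::] | x :: o' => Ent (t, i) p x.1 x.2 :: mk t p i.+1 o' end.

Variables (alive : nat -> 'I_n -> bool) (D : nat) (gid : 'I_n -> nat) (V : 'I_n -> bool).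

Definition pt (t : nat) : 'I_n := insubd p0 (t %% n).
Definition evf t := if alive t (pt t) then Some (pt t) else None.
Definition elig t (p : 'I_n) (e : entry) :=
  (edst e == p) && ((D <= t) || (gid (esrc e) == gid p)).

Definition stepc t (c : cfg) : sres :=
  match evf t with
  | None => SRes c None None [::] None
  | Some p =>
    let sel := ohead (filter (elig t p) (cpend c)) in
    let mi := omap (fun e => (esrc e, emsg e)) sel in
    let ri := omap (fun k => (k, false)) (cpq c p) in
    let r := step A p (csts c p) mi ri in
    let pend1 := if sel is Some e then filter (fun e' => eid e' != eid e) (cpend c)
                 else cpend c in
    SRes (Cfg (fun q => if q == p then r.1.1 else csts c q)
              (pend1 ++ mk t p 0 r.1.2)
              (fun q => if q == p then (if r.2 is Some _ then Some (cqc c p) else None)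
                        else cpq c q)
              (fun q => if q == p then cqc c p + (r.2 != None) else cqc c q))
         (omap eid sel) (cpq c p) r.1.2 r.2
  end.

Fixpoint cfgt t : cfg :=
  match t with
  | 0 => Cfg (fun p => init A p (V p)) [::] (fun _ => None) (fun _ => 0)
  | t'.+1 => sc (stepc t' (cfgt t'))
  end.

Definition simrun : run A :=
  Run (fun t => evf t) (fun t => srcv (stepc t (cfgt t))) (fun t => srsp (stepc t (cfgt t)))
      (fun t => csts (cfgt t)) (fun t => sout (stepc t (cfgt t)))
      (fun t => sqry (stepc t (cfgt t))) (fun _ => false).

Lemma cfgS t : cfgt t.+1 = sc (stepc t (cfgt t)). Proof. by []. Qed.

Lemma In_mk t p i o e : List.In e (mk t p i o) ->
  exists j, [/\ eid e = (t, i + j), esrc e = p & onth o j = Some (edst e, emsg e)].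
Proof.
elim: o i => [|x o IH] i //= [<-|/IH [j [-> -> Ho]]].
- by exists 0; rewrite addn0; case: x.
- by exists j.+1; rewrite addnS.
Qed.

Lemma mk_In t p i o j d m : onth o j = Some (d, m) ->
  List.In (Ent (t, i + j) p d m) (mk t p i o).
Proof.
elim: o i j => [|x o IH] i [|j] //=.
- by move=> [->]; left; rewrite addn0.
- by move=> /IH H; right; rewrite -addSnnS; apply: H.
Qed.


Definition R := simrun.

Lemma evfP t p : evf t = Some p -> alive t p /\ pt t = p.
Proof. by rewrite /evf; case: ifP => // H [<-]. Qed.

Lemma stepc_none t c : evf t = None -> stepc t c = SRes c None None [::] None.
Proof. by rewrite /stepc => ->. Qed.

Lemma qcountS t p : qcount R t.+1 p =
  qcount R t p + ((evf t == Some p) && (sqry (stepc t (cfgt t)) != None)).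
Proof. by rewrite /qcount big_ord_recr. Qed.

Lemma qc_inv t p : cqc (cfgt t) p = qcount R t p.
Proof.
elim: t => [|t IH]; first by rewrite /qcount big_ord0.
rewrite qcountS cfgS /stepc; case E: (evf t) => [q|] /=; last by rewrite addn0.
case: eqP => [<-|/eqP Hne]; first by rewrite eqxx /= IH.
have -> : (Some q == Some p) = false by apply/eqP => -[] /eqP; rewrite eq_sym (negbTE Hne).
by rewrite IH addn0.
Qed.

Definition pinv t (e : entry) :=
  [/\ (eid e).1 < t, evf (eid e).1 = Some (esrc e) &
      onth (sout (stepc (eid e).1 (cfgt (eid e).1))) (eid e).2 = Some (edst e, emsg e)].

Lemma pend_inv t e : List.In e (cpend (cfgt t)) -> pinv t e.
Proof.
elim: t e => [|t IH] e //=.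
rewrite /stepc; case E: (evf t) => [q|] /=; last first.
  by move=> /IH [H1 H2 H3]; split=> //; apply: ltnW.
case/In_cat.
- case: ohead => [e0|] => [/In_filter [] |]; move=> /IH [H1 H2 H3] *; split=> //; exact: ltnW.
- case/In_mk => j [Hid Hs Ho]; rewrite /pinv Hid /= Hs E; split=> //.
  by rewrite /stepc E.
Qed.

Lemma pinv_dst t t' e e' : pinv t e -> pinv t' e' -> eid e = eid e' -> edst e = edst e'.
Proof. by case=> _ _ H [_ _ H'] Heq; move: H; rewrite Heq H' => -[]. Qed.

Lemma stepc_pend t c e : List.In e (cpend (sc (stepc t c))) ->
  (List.In e (cpend c) /\ srcv (stepc t c) <> Some (eid e)) \/ (eid e).1 = t.
Proof.
rewrite /stepc; case E: (evf t) => [q|] /=; last by left.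
case/In_cat.
- case Es: ohead => [e0|] /=.
  + by case/In_filter => He /eqP Hne; left; split=> // -[] /esym.
  + by left.
- by case/In_mk => j [-> _ _]; right.
Qed.

Lemma pend_norcv t e : List.In e (cpend (cfgt t)) ->
  forall w, (eid e).1 < w < t -> srcv (stepc w (cfgt w)) <> Some (eid e).
Proof.
elim: t e => [|t IH] e //= /stepc_pend [[He Hr]|He] w /andP [H1 H2]; last first.
  by rewrite He in H1; rewrite ltnS leqNgt H1 in H2.
rewrite ltnS leq_eqVlt in H2; case/orP: H2 => [/eqP ->|H2] //.
by apply: IH => //; rewrite H1.
Qed.

Lemma stepc_other t c p : evf t <> Some p ->
  [/\ csts (sc (stepc t c)) p = csts c p, cpq (sc (stepc t c)) p = cpq c p
     & cqc (sc (stepc t c)) p = cqc c p].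
Proof.
rewrite /stepc; case: (evf t) => [q|] //= Hq.
have -> : (p == q) = false by apply/eqP => Hpq; apply: Hq; rewrite Hpq.
by [].
Qed.

Lemma pq_inv t p k : cpq (cfgt t) p = Some k ->
  exists t0 b, [/\ t0 < t, evf t0 = Some p, sqry (stepc t0 (cfgt t0)) = Some b,
     qcount R t0 p = k & forall u, t0 < u < t -> evf u <> Some p].
Proof.
elim: t => [|t IH] //=.
case: (eqVneq (evf t) (Some p)) => [E|E].
- rewrite /stepc E /= eqxx.
  case Eq: (step _ _ _ _ _).2 => [b|] // -[<-].
  exists t, b; split=> //; first (by rewrite /stepc E); first by rewrite qc_inv.
  by move=> u /andP [H1 H2]; rewrite ltnS leqNgt H1 in H2.
- have [_ -> _] := stepc_other (cfgt t) (elimN eqP E).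
  case/IH => t0 [b [H1 H2 H3 H4 H5]]; exists t0, b; split=> //; first exact: ltnW.
  move=> u /andP [Hu1]; rewrite ltnS leq_eqVlt => /orP [/eqP ->|Hu2].
  + exact/eqP.
  + by apply: H5; rewrite Hu1.
Qed.

Lemma pq_next t0 p b : evf t0 = Some p -> sqry (stepc t0 (cfgt t0)) = Some b ->
  forall u, t0 < u -> (forall w, t0 < w < u -> evf w <> Some p) ->
  cpq (cfgt u) p = Some (qcount R t0 p).
Proof.
move=> E Q; elim=> [|u IH] // Hu Hw.
rewrite ltnS leq_eqVlt in Hu; case/orP: Hu => [/eqP <-|Hu].
- rewrite /= {1}/stepc E /= eqxx; move: Q; rewrite /stepc E /= => ->; by rewrite qc_inv.
- have Hu' : evf u <> Some p by apply: Hw; rewrite Hu ltnSn.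
  rewrite /=; have [_ -> _] := stepc_other (cfgt u) Hu'.
  by apply: IH => // w /andP [H1 H2]; apply: Hw; rewrite H1 ltnS ltnW.
Qed.

Lemma pt_val t : val (pt t) = t %% n.
Proof. by rewrite /pt val_insubd ltn_pmod // (leq_ltn_trans (leq0n _) (ltn_ord p0)). Qed.

Lemma fair p T : (forall t, T <= t -> alive t p) -> forall u, exists2 t, u <= t & evf t = Some p.
Proof.
move=> HT u; have n0 : 0 < n by apply: leq_ltn_trans (ltn_ord p0).
pose t := (u + T) * n + p.
have Hpt : pt t = p by apply: val_inj; rewrite pt_val /t modnMDl modn_small.
have Hut : u + T <= t.
  by rewrite /t (leq_trans _ (leq_addr _ _)) // leq_pmulr.
exists t; first exact: leq_trans (leq_addr _ _) Hut.
by rewrite /evf Hpt HT // (leq_trans (leq_addl _ _) Hut).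
Qed.

Notation hasx x s := (has (fun e => eid e == x) s).

Lemma step_pos t x p : (forall e, List.In e (cpend (cfgt t)) -> eid e = x -> edst e = p) ->
  hasx x (cpend (cfgt t)) ->
  srcv (stepc t (cfgt t)) = Some x \/
  (hasx x (cpend (cfgt t.+1)) /\
   pos eid edst x p (cpend (cfgt t.+1)) <= pos eid edst x p (cpend (cfgt t))).
Proof.
move=> Hd Hh; rewrite /= /stepc; case E: (evf t) => [q|] /=; last by right.
case Es: ohead => [e0|] /=; last first.
  by right; rewrite has_cat Hh pos_cat.
case: (eqVneq (eid e0) x) => Hx; first by left; rewrite Hx.
right.
have Hk : forall e, List.In e (cpend (cfgt t)) -> eid e == x -> eid e != eid e0.
  by move=> e _ /eqP ->; rewrite eq_sym.
have Hh' := has_filter Hk Hh.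
by rewrite has_cat Hh' pos_cat // pos_filter.
Qed.

Lemma step_strict t x p : D <= t -> evf t = Some p ->
  (forall e, List.In e (cpend (cfgt t)) -> eid e = x -> edst e = p) ->
  hasx x (cpend (cfgt t)) ->
  srcv (stepc t (cfgt t)) = Some x \/
  (hasx x (cpend (cfgt t.+1)) /\
   pos eid edst x p (cpend (cfgt t.+1)) < pos eid edst x p (cpend (cfgt t))).
Proof.
move=> HD E Hd Hh; rewrite /= /stepc E /=.
have -> : filter (elig t p) (cpend (cfgt t)) = filter (fun e => edst e == p) (cpend (cfgt t)).
  by apply: eq_filter => e; rewrite /elig HD /= andbT.
have Hu : forall e e', List.In e (cpend (cfgt t)) -> List.In e' (cpend (cfgt t)) ->
    eid e = eid e' -> edst e = edst e'.
  by move=> e e' /pend_inv He /pend_inv He'; apply: (pinv_dst He He').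
have Hd' : forall e, List.In e (cpend (cfgt t)) -> eid e == x -> edst e == p.
  by move=> e He /eqP Hx; rewrite (Hd e He Hx).
have [e [-> Hor]] := pos_strict Hh Hd' Hu.
case: (eqVneq (eid e) x) => Hx; first by left; rewrite /= Hx.
case: Hor => [/eqP|Hlt]; first by rewrite (negbTE Hx).
right.
have Hk : forall e', List.In e' (cpend (cfgt t)) -> eid e' == x -> eid e' != eid e.
  by move=> e' _ /eqP ->; rewrite eq_sym.
have Hh' := has_filter Hk Hh.
by rewrite /= has_cat Hh' pos_cat.
Qed.

Lemma walk x p N ts : D <= ts -> evf ts = Some p ->
  (forall e t, List.In e (cpend (cfgt t)) -> eid e = x -> edst e = p) ->
  (forall u, hasx x (cpend (cfgt u)) -> pos eid edst x p (cpend (cfgt u)) < N ->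
     exists t, srcv (stepc t (cfgt t)) = Some x) ->
  forall d u, u + d = ts -> hasx x (cpend (cfgt u)) ->
    pos eid edst x p (cpend (cfgt u)) <= N ->
    exists t, srcv (stepc t (cfgt t)) = Some x.
Proof.
move=> HD Es Hd IHN; elim=> [|d IHd] u.
- rewrite addn0 => -> Hh Hp.
  case: (step_strict HD Es (fun e He => Hd e ts He) Hh) => [H|[Hh' Hlt]]; first by exists ts.
  by apply: (IHN ts.+1 Hh'); apply: leq_trans Hlt Hp.
- move=> Hu Hh Hp.
  case: (step_pos (fun e He => Hd e u He) Hh) => [H|[Hh' Hle]]; first by exists u.
  by apply: (IHd u.+1) => //; [rewrite addSnnS | apply: leq_trans Hle Hp].
Qed.

Lemma deliver x p T : (forall t, T <= t -> alive t p) ->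
  (forall e t, List.In e (cpend (cfgt t)) -> eid e = x -> edst e = p) ->
  forall u, hasx x (cpend (cfgt u)) -> exists t, srcv (stepc t (cfgt t)) = Some x.
Proof.
move=> HT Hd.
suff H : forall N u, hasx x (cpend (cfgt u)) -> pos eid edst x p (cpend (cfgt u)) < N ->
     exists t, srcv (stepc t (cfgt t)) = Some x.
  by move=> u Hh; apply: (H _ u Hh (ltnSn _)).
elim=> [|N IHN] u Hh Hp //.
have [ts Hts Es] := fair HT (maxn u D).
rewrite geq_max in Hts; case/andP: Hts => Hut HDt.
by apply: (walk HDt Es Hd IHN (d := ts - u) (u := u)) => //; rewrite subnKC.
Qed.

Lemma minput_eq t p : evf t = Some p ->
  minput R t = omap (fun e => (esrc e, emsg e)) (ohead (filter (elig t p) (cpend (cfgt t)))).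
Proof.
move=> E; rewrite /minput /=.
have -> : srcv (stepc t (cfgt t)) = omap eid (ohead (filter (elig t p) (cpend (cfgt t)))).
  by rewrite /stepc E.
case Es: ohead => [e|] //=.
have [He _] := ohead_filter Es.
have [H1 H2 H3] := pend_inv He.
move: H2 H3; case: (eid e) => s i /= -> ->; by [].
Qed.

Lemma rinput_eq t p : evf t = Some p ->
  rinput R t = omap (fun k => (k, false)) (cpq (cfgt t) p).
Proof. by move=> E; rewrite /rinput /= /stepc E /=; case: cpq. Qed.

Lemma rcv_inv t x : srcv (stepc t (cfgt t)) = Some x ->
  exists e, [/\ List.In e (cpend (cfgt t)), eid e = x & evf t = Some (edst e)].
Proof.
rewrite /stepc; case E: (evf t) => [q|] //=.
case Es: ohead => [e|] //= [<-].
have [He /andP [/eqP Hd _]] := ohead_filter Es.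
by exists e; rewrite Hd.
Qed.

Lemma qcount_mono a b p : a <= b -> qcount R a p <= qcount R b p.
Proof.
elim: b => [|b IH]; first by rewrite leqn0 => /eqP ->.
rewrite leq_eqVlt => /orP [/eqP ->|]; first by [].
rewrite ltnS => /IH H; rewrite qcountS; exact: leq_trans H (leq_addr _ _).
Qed.

Theorem sim_is_run (T2 : task n) (F : fpattern n) :
  (forall t p, alive t p -> p \notin F t) ->
  (forall p, p \notin Faulty F -> exists T, forall t, T <= t -> alive t p) ->
  (forall V', false \in tprob T2 F V') ->
  is_run R T2 F V.
Proof.
move=> HA HF HO; split.
- split.
  + by [].
  + by move=> t E; rewrite /= stepc_none.
  + move=> t p E0; have E : evf t = Some p := E0; rewrite (minput_eq E) (rinput_eq E).
    have [Ha _] := evfP E.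
    split.
    * exact: HA.
    * by rewrite /= /stepc E /= eqxx.
    * by rewrite /= /stepc E.
    * by rewrite /= /stepc E.
    * by move=> p' Hp'; rewrite /= /stepc E /= (negbTE Hp').
- split.
  + move=> t s i /rcv_inv [e [He Hx Ed]].
    have [H1 H2 H3] := pend_inv He.
    move: H1 H3; rewrite Hx /= => H1 H3; split=> //.
    by exists (edst e), (emsg e).
  + move=> t t' x Hr Hr'.
    have [e [He Hx _]] := rcv_inv Hr; have [e' [He' Hx' _]] := rcv_inv Hr'.
    have [H1 _ _] := pend_inv He; have [H1' _ _] := pend_inv He'.
    rewrite Hx in H1; rewrite Hx' in H1'.
    case: (ltngtP t t') => // Htt; exfalso.
    * by apply: (pend_norcv He' (w := t)); rewrite Hx' ?H1 ?Htt.
    * by apply: (pend_norcv He (w := t')); rewrite Hx ?H1' ?Htt.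
  + move=> s i p m Ho Hp.
    have [T HT] := HF p Hp.
    case Es: (evf s) => [q|]; last by move: Ho; rewrite /= stepc_none //=; case: i.
    have Hin : List.In (Ent (s, i) q p m) (cpend (cfgt s.+1)).
      rewrite /= {1}/stepc Es /=; apply/In_cat; right.
      by have := @mk_In s q 0 _ i p m; rewrite add0n; apply; move: Ho; rewrite /= /stepc Es.
    apply: (deliver HT _ (u := s.+1)).
    * move=> e t He Hx; have [_ _ H3] := pend_inv He.
      by move: H3 Ho; rewrite Hx /= => -> [].
    * by apply/hasP'; exists (Ent (s, i) q p m); split.
  + move=> p Hp t; have [T HT] := HF p Hp.
    by have [t' ? ?] := fair HT t; exists t'.
- split.
  + move=> t k; rewrite /= /stepc; case E: (evf t) => [p|] //= /pq_inv.
    move=> [t0 [b [H1 H2 H3 H4 _]]]; exists p; split=> //; exists t0, b; split=> //.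
  + move=> t t' p k E0 E0'; have E : evf t = Some p := E0; have E' : evf t' = Some p := E0'.
    have Hr : forall u, evf u = Some p -> srsp (stepc u (cfgt u)) = cpq (cfgt u) p.
      by move=> u Eu; rewrite /stepc Eu.
    move=> Hk Hk'.
    have Hk1 : cpq (cfgt t) p = Some k by rewrite -(Hr t E).
    have Hk2 : cpq (cfgt t') p = Some k by rewrite -(Hr t' E').
    have key : forall a a', a < a' -> evf a = Some p -> cpq (cfgt a) p = Some k ->
        cpq (cfgt a') p = Some k -> False.
      move=> a a' Ha Ea /pq_inv [t0 [b [H1 H2 H3 H4 H5]]] /pq_inv [t0' [b' [H1' H2' H3' H4' H5']]].
      have Hat : a <= t0'.
        by rewrite leqNgt; apply/negP => Hlt; apply: (H5' a); rewrite ?Hlt ?Ha.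
      have := qcount_mono p (leq_trans H1 Hat).
      by rewrite qcountS H2 eqxx H3 /= H4' H4 addn1 ltnn.
    case: (ltngtP t t') => // Htt; exfalso.
    * exact: (key t t').
    * exact: (key t' t).
  + by move=> k _ V' _; apply: HO.
  + move=> k _ p Hp [b [t0 [E0 Q0 K0]]].
    have E : evf t0 = Some p := E0.
    have [T HT] := HF p Hp.
    have Hex : exists t1, (t0 < t1) && (evf t1 == Some p).
      by have [t1 H1 H2] := fair HT t0.+1; exists t1; rewrite H1 H2 eqxx.
    case: (ex_minnP Hex) => t1 /andP [H1 /eqP H2] Hmin.
    exists t1; split=> //.
    change (srsp (stepc t1 (cfgt t1)) = Some k); rewrite /stepc H2 /=.
    rewrite (pq_next E Q0 H1) ?K0 //.
    move=> w /andP [Hw1 Hw2] Ew.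
    by have := Hmin w; rewrite Hw1 Ew eqxx leqNgt Hw2 => /(_ erefl).
Qed.

End Sim.

Lemma filter_nil T (P : pred T) s : (forall x, List.In x s -> P x = false) -> filter P s = [::].
Proof. elim: s => [|y s IH] //= H; rewrite H ?IH //; [by move=> x Hx; apply: H; right|by left]. Qed.

Section Indist.
Variables (n : nat) (A : alg n) (p0 : 'I_n) (al1 al2 : nat -> 'I_n -> bool) (D1 : nat)
  (V1 V2 : 'I_n -> bool) (gid : 'I_n -> nat) (g T : nat).
Hypotheses (HTD : T <= D1) (Hal : forall t p, t < T -> gid p == g -> al1 t p = al2 t p)
  (Hal2 : forall t p, al2 t p -> gid p == g) (HV : forall p, gid p == g -> V1 p = V2 p).

Definition Pg (e : entry A) := (gid (esrc e) == g) && (gid (edst e) == g).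
Let c1 t := cfgt A p0 al1 D1 gid V1 t.
Let c2 t := cfgt A p0 al2 0 gid V2 t.

Lemma pend2_src t e : List.In e (cpend (c2 t)) -> gid (esrc e) == g.
Proof.
move/pend_inv => [_ H _]; have [H1 _] := evfP H; exact: Hal2 H1.
Qed.

Lemma indist t : t <= T ->
  (forall p, gid p == g -> [/\ csts (c1 t) p = csts (c2 t) p, cpq (c1 t) p = cpq (c2 t) p
                            & cqc (c1 t) p = cqc (c2 t) p]) /\
  filter Pg (cpend (c1 t)) = filter Pg (cpend (c2 t)).
Proof.
elim: t => [|t IH] Ht.
  by split=> // p Hp; rewrite /c1 /c2 /= HV.
have [IHs IHp] := IH (ltnW Ht).
have Ht' : t < T := Ht.
rewrite /c1 /c2 !cfgS -/(c1 t) -/(c2 t).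
set q := pt p0 t.
case: (boolP (gid q == g)) => Hq.
- case Ea: (al2 t q).
  + have E2 : evf p0 al2 t = Some q by rewrite /evf -/q Ea.
    have E1 : evf p0 al1 t = Some q by rewrite /evf -/q Hal // Ea.
    have Hsel : ohead (filter (elig D1 gid t q) (cpend (c1 t))) =
                ohead (filter (elig 0 gid t q) (cpend (c2 t))).
      have -> : filter (elig D1 gid t q) (cpend (c1 t)) =
                filter (fun e => edst e == q) (filter Pg (cpend (c1 t))).
        rewrite -filter_predI; apply: eq_filter => e /=.
        rewrite /elig /Pg leqNgt (leq_trans Ht' HTD) /= (eqP Hq).
        by case: eqP => //= ->; rewrite Hq andbT.
      have -> : filter (elig 0 gid t q) (cpend (c2 t)) =
                filter (fun e => edst e == q) (filter Pg (cpend (c2 t))).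
        rewrite -filter_predI; apply: eq_In_filter => e He /=.
        rewrite /elig /Pg /= (pend2_src He) /=.
        by case: eqP => //= ->; rewrite Hq.
      by rewrite IHp.
    have [Hs Hpq Hqc] := IHs q Hq.
    rewrite /stepc E1 E2 /= Hsel Hs Hpq Hqc.
    set r := step _ _ _ _ _.
    split.
    * move=> p Hp; have [Hs' Hpq' Hqc'] := IHs p Hp.
      by case: eqP => _ //=.
    * rewrite !filter_cat; congr (_ ++ _).
      case: ohead => [e|] //.
      by rewrite filter_comm IHp -filter_comm.
  + have E2 : evf p0 al2 t = None by rewrite /evf -/q Ea.
    have E1 : evf p0 al1 t = None by rewrite /evf -/q Hal // Ea.
    by rewrite !stepc_none.
- have Ea : al2 t q = false by apply/negP => /Hal2 H; rewrite H in Hq.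
  have E2 : evf p0 al2 t = None by rewrite /evf -/q Ea.
  rewrite (@stepc_none _ _ p0 al2 0 gid t (c2 t) E2).
  case E1: (evf p0 al1 t) => [q'|]; last by rewrite stepc_none.
  have Hq' : q' = q by have [_ <-] := evfP E1.
  split.
  + move=> p Hp.
    have Hne : evf p0 al1 t <> Some p.
      by rewrite E1 Hq' => -[Hpq]; rewrite Hpq Hp in Hq.
    have [-> -> ->] := stepc_other D1 gid (c1 t) Hne.
    exact: IHs.
  + rewrite -IHp /stepc E1 /= filter_cat.
    rewrite (@filter_nil _ Pg (mk _ _ _ _)) ?cats0; last first.
      move=> e /In_mk [j [_ Hs _]]; rewrite /Pg Hs Hq'; apply/negbTE.
      by rewrite negb_and Hq.
    case Es: ohead => [e|] //.
    rewrite filter_comm; rewrite -[RHS]filter_predT; apply: eq_In_filter => e' /In_filter [He' Pe'] /=.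
    apply/eqP => Hid.
    have [He /andP [/eqP Hd _]] := ohead_filter Es.
    have := pinv_dst (pend_inv He') (pend_inv He) Hid.
    rewrite Hd Hq' => Hdst; move: Pe'; rewrite /Pg Hdst.
    by rewrite (negbTE Hq) andbF.
Qed.
End Indist.


Lemma card_lt n m : m <= n -> #|[set p : 'I_n | p < m]| = m.
Proof.
move=> Hm.
have -> : [set p : 'I_n | p < m] = [set widen_ord Hm i | i in 'I_m].
  apply/setP => p; rewrite inE; apply/idP/imsetP.
  - by move=> Hp; exists (Ordinal Hp) => //; apply: val_inj.
  - by case=> i _ ->; rewrite /= ltn_ord.
by rewrite card_imset ?card_ord //; by move=> i j /(congr1 val) /= /val_inj.
Qed.
Lemma card_int n a b : a <= b -> b <= n -> #|[set p : 'I_n | a <= p < b]| = b - a.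
Proof.
move=> Hab Hb.
have -> : [set p : 'I_n | a <= p < b] = [set p : 'I_n | p < b] :\: [set p : 'I_n | p < a].
  by apply/setP => p; rewrite !inE -leqNgt andbC.
rewrite cardsD card_lt //.
have -> : [set p : 'I_n | p < b] :&: [set p : 'I_n | p < a] = [set p : 'I_n | p < a].
  by apply/setP => p; rewrite !inE andbC; case H: (p < a) => //=; apply: leq_trans H Hab.
by rewrite card_lt // (leq_trans Hab Hb).
Qed.

Lemma Faulty_eq n (F : fpattern n) (S : {set 'I_n}) :
  (forall p, p \in S -> exists t, p \in F t) -> (forall t p, p \in F t -> p \in S) ->
  Faulty F = S.
Proof.
move=> H1 H2; apply/setP => p; rewrite inE; apply/asboolP/idP.
- by case=> t /H2.
- exact: H1.
Qed.

Section Main.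
Variables (n f k : nat).
Hypotheses (Hf : 1 <= f) (Hfk : f < k) (Hkn : k <= n) (Hn2 : n <= 2 * f).

Let m := n - f.
Definition gidf (p : 'I_n) : nat := if p < m then 0 else if p < 2 * m then 1 else 2.

Lemma gid_lt2 p : gidf p != 0 -> gidf p != 2 -> gidf p == 1.
Proof. by rewrite /gidf; case: ifP => //; case: ifP. Qed.

Lemma gid_cases p : [\/ gidf p = 0, gidf p = 1 | gidf p = 2].
Proof. by rewrite /gidf; case: ifP => _; [constructor 1|case: ifP => _; [constructor 2|constructor 3]]. Qed.

Lemma m_pos : 0 < m. Proof. rewrite /m; lia. Qed.
Lemma m2 : 2 * m <= n.
Proof. rewrite /m; lia. Qed.

Lemma card_g0 : #|[set p | gidf p != 0]| = f.
Proof.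
have -> : [set p | gidf p != 0] = ~: [set p : 'I_n | p < m].
  by apply/setP => p; rewrite !inE /gidf; case: ifP => //; case: ifP.
have := cardsC [set p : 'I_n | p < m]; rewrite card_lt ?card_ord /m; lia.
Qed.

Lemma card_g1 : #|[set p | gidf p != 1]| = f.
Proof.
have -> : [set p | gidf p != 1] = ~: [set p : 'I_n | m <= p < 2 * m].
  apply/setP => p; rewrite !inE /gidf.
  case: (ltnP p m) => H1; case: (ltnP p (2 * m)) => H2 /=.
  all: try done; try (by have := m_pos; lia).

have := m2; have := cardsC [set p : 'I_n | m <= p < 2 * m].
rewrite card_int ?card_ord /m; lia.
Qed.

Lemma oracle_false (F : fpattern n) V' : #|Faulty F| = f -> false \in tprob (kTAg n f f) F V'.
Proof.
move=> HF; rewrite /= /kTAg_prob; case: ifP => _; first by rewrite inE.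
by rewrite HF ltnn andbF inE.
Qed.

Theorem not_red : ~ C_reducible (kTAg n k f) (kTAg n f f).
Proof.
case=> A HA.
have n0 : 0 < n by apply: leq_trans Hkn; apply: leq_trans Hfk.
pose p0 : 'I_n := Ordinal n0.
have Hmn : m < n by rewrite /m ltn_subrL Hf n0.
pose q1 : 'I_n := Ordinal Hmn.
have gp0 : gidf p0 = 0 by rewrite /gidf /= m_pos.
have gq1 : gidf q1 = 1 by rewrite /gidf /= ltnn -{1}(mul1n m) ltn_pmul2r ?m_pos.
pose Fa : fpattern n := fun _ => [set p | gidf p != 0].
pose ala : nat -> 'I_n -> bool := fun _ p => gidf p == 0.
pose Va : 'I_n -> bool := fun _ => true.
have FaE : Faulty Fa = [set p | gidf p != 0].
  by apply: Faulty_eq => [p Hp|//]; exists 0.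
have Ha_alive : forall t p, ala t p -> p \notin Fa t by move=> t p; rewrite inE negbK.
have Ha_fair : forall p, p \notin Faulty Fa -> exists T, forall t, T <= t -> ala t p.
  by move=> p; rewrite FaE inE negbK => H; exists 0.
have cFa : #|Faulty Fa| = f by rewrite FaE card_g0.
have Ra := sim_is_run A p0 0 gidf Va Ha_alive Ha_fair (fun V' => oracle_false V' cFa).
have [Ta _ _ Vala] := HA Fa Va _ (fun _ _ _ => subxx _) (eq_leq cFa) Ra.
have [t1 [d1 Hd1]] : exists t d, dec A (st (R A p0 ala 0 gidf Va) t p0) = Some d.
  by apply: Ta; rewrite FaE inE gp0.
have d1T : d1 = true.
  have := Vala _ _ _ Hd1; rewrite /= /kTAg_prob.
  have -> : #|[set p | ~~ Va p]| = 0.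
    by apply/eqP; rewrite cards_eq0; apply/eqP/setP => p; rewrite !inE.
  rewrite leqNgt (leq_ltn_trans (leq0n f) Hfk) /=.
  have -> : [forall p, Va p] = true by apply/forallP.
  by rewrite cFa Hfk inE => /eqP.
pose Fb : fpattern n := fun _ => [set p | gidf p != 1].
pose alb : nat -> 'I_n -> bool := fun _ p => gidf p == 1.
pose Vb : 'I_n -> bool := fun _ => false.
have FbE : Faulty Fb = [set p | gidf p != 1].
  by apply: Faulty_eq => [p Hp|//]; exists 0.
have Hb_alive : forall t p, alb t p -> p \notin Fb t by move=> t p; rewrite inE negbK.
have Hb_fair : forall p, p \notin Faulty Fb -> exists T, forall t, T <= t -> alb t p.
  by move=> p; rewrite FbE inE negbK => H; exists 0.
have cFb : #|Faulty Fb| = f by rewrite FbE card_g1.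
have Rb := sim_is_run A p0 0 gidf Vb Hb_alive Hb_fair (fun V' => oracle_false V' cFb).
have [Tb _ _ Valb] := HA Fb Vb _ (fun _ _ _ => subxx _) (eq_leq cFb) Rb.
have [t2 [d2 Hd2]] : exists t d, dec A (st (R A p0 alb 0 gidf Vb) t q1) = Some d.
  by apply: Tb; rewrite FbE inE gq1.
have d2F : d2 = false.
  have := Valb _ _ _ Hd2; rewrite /= /kTAg_prob.
  have -> : #|[set p | ~~ Vb p]| = n.
    rewrite -[RHS]card_ord -cardsT; congr #|_|; by apply/setP => p; rewrite !inE.
  by rewrite Hkn inE => /eqP.
pose D := t1 + t2.
pose Fg : fpattern n := fun t => [set p | (gidf p == 2) || ((D <= t) && (gidf p == 0))].
pose alg : nat -> 'I_n -> bool := fun t p => ((gidf p == 0) && (t < D)) || (gidf p == 1).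
pose Vg : 'I_n -> bool := fun p => gidf p == 0.
have FgE : Faulty Fg = [set p | gidf p != 1].
  apply: Faulty_eq => [p|t p]; rewrite !inE.
  - by move=> Hp; exists D; rewrite inE leqnn /=; case: (gid_cases p) Hp => ->.
  - by case: (gid_cases p) => ->; rewrite ?andbF.
have cFg : #|Faulty Fg| = f by rewrite FgE card_g1.
have Hg_nd : nondecreasing Fg.
  move=> t t' Htt; apply/subsetP => p; rewrite !inE.
  case/orP => [->//|/andP [H1 ->]]; by rewrite (leq_trans H1 Htt) orbT.
have Hg_alive : forall t p, alg t p -> p \notin Fg t.
  move=> t p; rewrite inE /alg; case: (gid_cases p) => ->; rewrite /= ?orbF ?andbT ?andbF //.
  by rewrite -ltnNge.
have Hg_fair : forall p, p \notin Faulty Fg -> exists T, forall t, T <= t -> alg t p.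
  move=> p; rewrite FgE inE negbK => /eqP H; exists 0 => t _; by rewrite /alg H orbT.
have Rg := sim_is_run A p0 D gidf Vg Hg_alive Hg_fair (fun V' => oracle_false V' cFg).
have [_ _ Agg _] := HA Fg Vg _ Hg_nd (eq_leq cFg) Rg.
have H1a : forall t p, t < D -> gidf p == 0 -> alg t p = ala t p.
  by move=> t p Ht Hp; rewrite /alg /ala Hp Ht.
have H1v : forall p, gidf p == 0 -> Vg p = Va p by move=> p Hp; rewrite /Vg /Va Hp.
have H2a : forall t p, t < D -> gidf p == 1 -> alg t p = alb t p.
  by move=> t p Ht Hp; rewrite /alg /alb Hp orbT.
have H2v : forall p, gidf p == 1 -> Vg p = Vb p by move=> p Hp; rewrite /Vg /Vb (eqP Hp).
have Hst1 : st (R A p0 alg D gidf Vg) t1 p0 = st (R A p0 ala 0 gidf Va) t1 p0.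
  have [HH _] := @indist n A p0 alg ala D Vg Va gidf 0 D (leqnn D)
    H1a (fun t p H => H) H1v t1 (leq_addr _ _).
  by have [E1 _ _] := HH p0 (introT eqP gp0).
have Hst2 : st (R A p0 alg D gidf Vg) t2 q1 = st (R A p0 alb 0 gidf Vb) t2 q1.
  have [HH _] := @indist n A p0 alg alb D Vg Vb gidf 1 D (leqnn D)
    H2a (fun t p H => H) H2v t2 (leq_addl _ _).
  by have [E1 _ _] := HH q1 (introT eqP gq1).
rewrite -Hst1 d1T in Hd1; rewrite -Hst2 d2F in Hd2.
by have := Agg _ _ _ _ _ _ Hd1 Hd2.
Qed.
End Main.

Theorem mainTheorem12 (n f : nat) :
  1 <= f -> f <= n - 1 -> n <= 2 * f ->
  ~ C_reducible (kTAg n f.+1 f) (kTAg n f f) /\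
  ~ C_reducible (Cons_task n f) (kTAg n f f).
Proof.
move=> H1 H2 H3; split.
- apply: not_red => //; lia.
- apply: (@not_red n f n) => //; lia.
Qed.
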